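(* Let $X$ be a finite-dimensional real vector space, $\phi:X\to\mathbf{R}$ a strictly convex norm, $K\subseteq X$ closed, $0<s<t<\infty$, $1<\lambda<\infty$, and $K_{\lambda,s,t}=\{x:\rho^\phi_K(x)\ge\lambda,\ s\le\delta^\phi_K(x)\le t\}$. Then $\xi^\phi_K$ is single-valued on $K_{\lambda,s,t}$ and $\xi^\phi_K|K_{\lambda,s,t}$ is uniformly continuous.
   Context: A norm $\phi$ is strictly convex if $\phi(a+b)=\phi(a)+\phi(b)$ implies $\phi(b)a=\phi(a)b$. For closed $K$: $\delta^\phi_K(x)=\inf\{\phi(y-x):y\in K\}$; $\xi^\phi_K(x)=K\cap\{w:\phi(x-w)=\delta^\phi_K(x)\}$; $\rho^\phi_K(x)=\sup\bigl(\mathbf{R}\cap\{s':\delta^\phi_K(w+s'(x-w))=s'\delta^\phi_K(x)\}\bigr)$ for any $w\in\xi^\phi_K(x)$ (independent of the choice of $w$). *)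

(* Defs.v *)
From HB Require Import structures.
From mathcomp Require Import all_boot all_order all_algebra.
From mathcomp Require Import all_classical all_reals all_analysis.
Set Implicit Arguments. Unset Strict Implicit. Unset Printing Implicit Defensive.
Import Order.TTheory GRing.Theory Num.Theory.
Import numFieldNormedType.Exports.
Local Open Scope classical_set_scope.
Local Open Scope ring_scope.

Definition is_norm (R : realType) (n : nat) (phi : 'rV[R]_n -> R) : Prop :=
  [/\ (forall x, phi x = 0 -> x = 0),
      (forall (c : R) x, phi (c *: x) = `|c| * phi x) &
      (forall x y, phi (x + y) <= phi x + phi y)].

Definition strictly_convex (R : realType) (n : nat) (phi : 'rV[R]_n -> R) : Prop :=
  forall a b, phi (a + b) = phi a + phi b -> phi b *: a = phi a *: b.

Definition delta (R : realType) (n : nat) (phi : 'rV[R]_n -> R)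
  (K : set 'rV[R]_n) (x : 'rV[R]_n) : R :=
  inf [set phi (y - x) | y in K].

Definition xi (R : realType) (n : nat) (phi : 'rV[R]_n -> R)
  (K : set 'rV[R]_n) (x : 'rV[R]_n) : set 'rV[R]_n :=
  K `&` [set w | phi (x - w) = delta phi K x].

Definition rho_at (R : realType) (n : nat) (phi : 'rV[R]_n -> R)
  (K : set 'rV[R]_n) (x w : 'rV[R]_n) : \bar R :=
  ereal_sup [set s'%:E | s' in
    [set s' : R | delta phi K (w + s' *: (x - w)) = s' * delta phi K x]].

(* rho^phi_K(x), computed with some w in xi^phi_K(x) (the paper notes the
   value does not depend on the choice of w). *)
Definition rho (R : realType) (n : nat) (phi : 'rV[R]_n -> R)
  (K : set 'rV[R]_n) (x : 'rV[R]_n) : \bar R :=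
  rho_at phi K x (xget 0 (xi phi K x)).

Definition Klst (R : realType) (n : nat) (phi : 'rV[R]_n -> R)
  (K : set 'rV[R]_n) (lam s t : R) : set 'rV[R]_n :=
  [set x | (lam%:E <= rho phi K x)%E /\ s <= delta phi K x <= t].

(* Main.v *)
Require Import Defs.
Set Warnings "-all".
From HB Require Import structures.
From mathcomp Require Import all_boot all_order all_algebra.
From mathcomp Require Import all_classical all_reals all_analysis.
From mathcomp Require Import lra ring.
Import Order.TTheory GRing.Theory Num.Theory.
Import numFieldNormedType.Exports.
Local Open Scope classical_set_scope.
Local Open Scope ring_scope.

Section S.
Variables (R : realType) (n : nat) (phi : 'rV[R]_n -> R).
Hypothesis Hn : is_norm phi.

Let V := 'rV[R]_n.

Lemma nZ c (x : V) : phi (c *: x) = `|c| * phi x.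
Proof. by case: Hn. Qed.
Lemma nD (x y : V) : phi (x + y) <= phi x + phi y.
Proof. by case: Hn. Qed.
Lemma n0 : phi 0 = 0.
Proof. by rewrite -(scale0r (0:V)) nZ normr0 mul0r. Qed.
Lemma nN (x : V) : phi (- x) = phi x.
Proof. by rewrite -scaleN1r nZ normrN normr1 mul1r. Qed.
Lemma nge0 (x : V) : 0 <= phi x.
Proof.
have := nD x (- x); rewrite subrr n0 nN => h.
have : 0 <= phi x *+ 2 by rewrite mulr2n.
by rewrite pmulrn_lge0.
Qed.
Lemma nB (x y : V) : phi (x - y) = phi (y - x).
Proof. by rewrite -nN opprB. Qed.
Lemma nlip (x y : V) : `|phi x - phi y| <= phi (x - y).
Proof.
rewrite ler_norml; apply/andP; split.
- have := nD (y - x) x; rewrite subrK nB; lra.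
- have := nD (x - y) y; rewrite subrK; lra.
Qed.
Lemma neq0 (x : V) : phi x = 0 -> x = 0.
Proof. by case: Hn => H _ _; apply: H. Qed.

Lemma nsum (F : 'I_n -> V) : phi (\sum_i F i) <= \sum_i phi (F i).
Proof.
apply: (big_ind2 (fun a b => phi a <= b)) => //; first by rewrite n0.
by move=> a b c d h1 h2; apply: le_trans (nD _ _) _; apply: lerD.
Qed.

Lemma entry_le (x : V) i : `|x 0 i| <= `|x|.
Proof.
have /mapP[j Hj ->] : `|x 0 i| \in [seq `|x k.1 k.2| | k : 'I_1 * 'I_n].
  by apply/mapP; exists (0, i) => //=; rewrite mem_enum.
by rewrite [leRHS]/Num.Def.normr /= mx_normrE; apply/bigmax_geP; right => /=; exists j.
Qed.

Lemma nupper : exists2 C, 0 < C & forall x : V, phi x <= C * `|x|.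
Proof.
exists (\sum_(i < n) phi 'e_i + 1).
  by rewrite ltr_wpDl // sumr_ge0 // => i _; apply: nge0.
move=> x; rewrite {1}(row_sum_delta x).
apply: le_trans (nsum _) _.
rewrite mulrDl mul1r; apply: ler_wpDr; first exact: normr_ge0.
rewrite mulrC mulr_sumr; apply: ler_sum => i _; rewrite nZ mulrC; idtac.
rewrite [leRHS]mulrC; by apply: ler_wpM2r; [apply: nge0 | apply: entry_le].
Qed.

Lemma ncont : continuous phi.
Proof.
have [C C0 HC] := nupper.
move=> x; apply/(@cvgrPdist_lt _ _ _ (nbhs x) (nbhs_filter x)) => e e0.
apply/(@nbhs_normP R ('rV[R]_n)); exists (e / C); first by rewrite /= divr_gt0.
move=> y /= hy.
apply: le_lt_trans (nlip _ _) _.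
apply: le_lt_trans (HC _) _.
by rewrite mulrC -ltr_pdivlMr.
Qed.


Lemma normalize (x : V) : x != 0 -> `| (`|x|^-1 *: x) | = 1.
Proof.
move=> x0; rewrite normrZ normrV ?unitfE ?normr_eq0 // normr_id mulVf //.
by rewrite normr_eq0.
Qed.

Lemma nlower : exists2 c, 0 < c & forall x : V, c * `|x| <= phi x.
Proof.
case: (pselect (exists x : V, `|x| = 1)) => [ne|none]; last first.
  exists 1 => // x; case: (eqVneq x 0) => [->|x0]; first by rewrite normr0 n0 mulr0.
  by exfalso; apply: none; exists (`|x|^-1 *: x); apply: normalize.
have cS : compact [set x : V | `|x| = 1].
  apply: bounded_closed_compact.
    exists 1; split => // M M1 x /= ->; exact: ltW.
  apply: (@preimage_closed _ _ (fun x : V => `|x|) [set r : R | r = 1]).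
    by move=> x _; apply: norm_continuous.
  exact: closed_eq.
have [x0 hx0 hmin] := compact_EVT_min ne cS (continuous_subspaceT ncont).
move: hx0; rewrite inE /= => hx0.
have c0 : 0 < phi x0.
  rewrite lt_def nge0 andbT; apply/eqP => /neq0 h.
  by move: hx0; rewrite h normr0 => /eqP; rewrite eq_sym oner_eq0.
exists (phi x0) => // x; case: (eqVneq x 0) => [->|xn0]; first by rewrite normr0 mulr0 n0.
have := hmin (`|x|^-1 *: x); rewrite inE /= normalize // => /(_ erefl).
rewrite nZ normrV ?unitfE ?normr_eq0 // normr_id => h.
rewrite mulrC -ler_pdivlMl ?normr_gt0 //.
Qed.


Lemma nbounded_compact (A : set V) (x0 : V) r :
  closed A -> (forall x, A x -> phi (x - x0) <= r) -> compact A.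
Proof.
move=> cA hA; apply: bounded_closed_compact => //.
have [c c0 hc] := nlower.
exists (`|x0| + r / c); split; first exact: num_real.
move=> M HM x /hA hx; apply: ltW; apply: le_lt_trans HM.
rewrite -(subrK x0 x); apply: le_trans (ler_normD _ _) _.
rewrite addrC lerD2l ler_pdivlMr // mulrC.
exact: le_trans (hc _) hx.
Qed.

Lemma closed_pre (T : topologicalType) (f : T -> R) (B : set R) :
  continuous f -> closed B -> closed (f @^-1` B).
Proof. by move=> cf cB; apply: preimage_closed => // x _; apply: cf. Qed.

Hypothesis Hsc : strictly_convex phi.

Lemma modulus e : 0 < e -> exists2 k, 0 < k &
  forall u v : V, phi u = 1 -> phi v = 1 -> e <= phi (u - v) -> phi (u + v) <= 2 - k.
Proof.
move=> e0.
have cS : compact [set u : V | phi u = 1].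
  apply: (@nbounded_compact _ 0 1); last by move=> x; rewrite subr0 => ->.
  have := @closed_pre V phi _ ncont (@closed_eq R 1). exact.
set P := ([set u : V | phi u = 1] `*` [set u : V | phi u = 1]) `&`
          [set p | e <= phi (p.1 - p.2)].
have cP : compact P.
  apply: compact_closedI; first exact: compact_setX.
  apply: (@closed_pre _ (fun p : V * V => phi (p.1 - p.2)) [set r | e <= r]); last exact: closed_ge.
  move=> p; apply: continuous_comp; first exact: sub_continuous.
  exact: ncont.
case: (pselect (P !=set0)) => [ne|none]; last first.
  exists 1 => // u v hu hv he; exfalso; apply: none; exists (u, v); split => //.
have cg : continuous (fun p : V * V => phi (p.1 + p.2)).
  move=> p; apply: continuous_comp; first exact: add_continuous.
  exact: ncont.
have [[u0 v0] hp0 hmax] := compact_EVT_max ne cP (continuous_subspaceT cg).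
move: hp0; rewrite inE => -[[/= hu hv] /= he].
exists (2 - phi (u0 + v0)).
  rewrite subr_gt0 lt_def; apply/andP; split; last by have := nD u0 v0; rewrite hu hv.
  apply/eqP => h.
  have := Hsc u0 v0; rewrite hu hv -h !scale1r => /(_ ltac:(lra)) h2.
  by move: he; rewrite h2 subrr n0; lra.
move=> u v hu1 hv1 huv; rewrite (_ : 2 - (2 - phi (u0 + v0)) = phi (u0 + v0)); last by rewrite opprB addrC subrK.
by apply: (hmax (u, v)); rewrite inE.
Qed.


Lemma lipcont (f : V -> R) : (forall a b, `|f a - f b| <= phi (a - b)) -> continuous f.
Proof.
move=> hf; have [C C0 HC] := nupper.
move=> x; apply/(@cvgrPdist_lt _ _ _ (nbhs x) (nbhs_filter x)) => e e0.
apply/(@nbhs_normP R ('rV[R]_n)); exists (e / C); first by rewrite /= divr_gt0.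
move=> y /= hy.
apply: le_lt_trans (hf _ _) _.
apply: le_lt_trans (HC _) _.
by rewrite mulrC -ltr_pdivlMr.
Qed.

Lemma ncont_shift (x : V) : continuous (fun y : V => phi (y - x)).
Proof.
by apply: lipcont => a b; rewrite (_ : a - b = (a - x) - (b - x)) ?nlip // opprB addrA subrK.
Qed.

Variable K : set V.

Lemma delta_lb (x y : V) : K y -> delta phi K x <= phi (y - x).
Proof.
move=> Ky; apply: ge_inf; last by exists y.
by exists 0 => r [z _ <-]; apply: nge0.
Qed.

Lemma delta_ge0 (x : V) : K !=set0 -> 0 <= delta phi K x.
Proof.
move=> [y Ky]; apply: lb_le_inf; first by exists (phi (y - x)), y.
by move=> r [z _ <-]; apply: nge0.
Qed.

Lemma delta_lip (y z : V) : K !=set0 -> delta phi K z <= delta phi K y + phi (z - y).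
Proof.
move=> [k0 Kk0]; rewrite -lerBlDr; apply: lb_le_inf; first by exists (phi (k0 - y)), k0.
move=> r [k Kk <-]; rewrite lerBlDr.
apply: le_trans (delta_lb z k Kk) _.
rewrite (_ : k - z = (k - y) + (y - z)); last by rewrite addrA subrK.
by apply: le_trans (nD _ _) _; rewrite (nB y z).
Qed.

Lemma delta_attain (x : V) : closed K -> K !=set0 ->
  exists w, K w /\ phi (x - w) = delta phi K x.
Proof.
move=> cK [k0 Kk0].
set d := delta phi K x.
have hinf : has_inf [set phi (y - x) | y in K].
  split; first by exists (phi (k0 - x)), k0.
  by exists 0 => r [z _ <-]; apply: nge0.
have [r [y Ky <-] hy] := inf_adherent ltr01 hinf.
set D := K `&` [set y | phi (y - x) <= d + 1].
have cD : compact D.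
  apply: (@nbounded_compact _ x (d + 1)); last by move=> z [].
  apply: closedI => //.
  exact: (@closed_pre V (fun y => phi (y - x)) _ (ncont_shift x) (@closed_le R (d + 1))).
have neD : D !=set0 by exists y; split => //=; apply: ltW.
have [w hw hmin] := compact_EVT_min neD cD (continuous_subspaceT (ncont_shift x)).
move: hw; rewrite inE => -[Kw hw].
exists w; split => //; apply/eqP; rewrite eq_le; apply/andP; split; last first.
  by rewrite nB; apply: delta_lb.
rewrite nB; apply: lb_le_inf; first by exists (phi (k0 - x)), k0.
move=> r' [z Kz <-].
case: (lerP (phi (z - x)) (d + 1)) => hz.
  by apply: hmin; rewrite inE.
apply: ltW; apply: le_lt_trans hz.
apply: le_trans (ltW hy).
by apply: hmin; rewrite inE; split => //; apply: ltW.
Qed.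


Lemma M2 k e
  (Hk : forall u v : V, phi u = 1 -> phi v = 1 -> e <= phi (u - v) -> phi (u + v) <= 2 - k)
  (pa pb : R) (u v : V) : phi u = 1 -> phi v = 1 -> 0 < pa -> pa <= pb ->
  e <= phi (u - v) -> phi (pa *: u + pb *: v) <= pa + pb - k * pa.
Proof.
move=> hu hv pa0 pab he.
rewrite (_ : pa *: u + pb *: v = pa *: (u + v) + (pb - pa) *: v); last first.
  by rewrite scalerDr scalerBl -addrA; congr (_ + _); rewrite addrC subrK.
apply: le_trans (nD _ _) _; rewrite !nZ hv (gtr0_norm pa0) ger0_norm ?subr_ge0 //.
have := Hk _ _ hu hv he => h.
have : pa * phi (u + v) <= pa * (2 - k) by rewrite ler_pM2l.
lra.
Qed.

Lemma rho_mu (x w : V) (mu s' : R) : K w -> phi (x - w) = delta phi K x ->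
  0 <= mu <= s' -> delta phi K (w + s' *: (x - w)) = s' * delta phi K x ->
  mu * delta phi K x <= delta phi K (w + mu *: (x - w)).
Proof.
move=> Kw hw /andP[mu0 mus] hs.
have := delta_lip (w + mu *: (x - w)) (w + s' *: (x - w)) (ex_intro _ w Kw).
rewrite hs (_ : w + s' *: (x - w) - (w + mu *: (x - w)) = (s' - mu) *: (x - w)); last first.
  by rewrite opprD addrACA subrr add0r scalerBl.
rewrite nZ ger0_norm ?subr_ge0 // hw.
lra.
Qed.


Lemma main (s t mu : R) : 0 < s -> 0 < t -> 1 < mu -> mu <= 2 ->
  forall e, 0 < e -> exists2 d, 0 < d & forall x x' w w' : V,
  K w -> phi (x - w) = delta phi K x -> s <= delta phi K x -> delta phi K x <= t ->
  mu * delta phi K x <= delta phi K (w + mu *: (x - w)) ->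
  K w' -> phi (x' - w') = delta phi K x' -> phi (x - x') < d -> phi (w - w') < e.
Proof.
move=> s0 t0 mu1 mu2 e e0.
have e2t : 0 < e / (2 * t) by rewrite divr_gt0 // mulr_gt0.
have [k k0 Hk] := modulus (e / (2 * t)) e2t.
have m0 : 0 < k * ((mu - 1) * s) / 2 by rewrite divr_gt0 // mulr_gt0 // mulr_gt0 // subr_gt0.
exists (Num.min (k * ((mu - 1) * s) / 2) (e / 4)).
  by rewrite lt_min m0 divr_gt0.
move=> x x' w w' Kw hw hs ht hmu Kw' hw' hd.
set dl := delta phi K x in hw hs ht hmu *.
set eta := phi (x - x') in hd.
have K0 : K !=set0 by exists w.
have dl0 : 0 < dl by apply: lt_le_trans hs.
move: hd; rewrite lt_min => /andP[hd1 hd2].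
set b := x - w'.
have hb1 : dl <= phi b by rewrite /b nB; apply: delta_lb.
have hb2 : phi b <= dl + 2 * eta.
  have h1 : phi b <= eta + delta phi K x'.
    by rewrite -hw' /b (_ : x - w' = (x - x') + (x' - w')) ?nD // addrA subrK.
  have h2 := delta_lip x x' K0; rewrite nB -/eta in h2.
  lra.
have pb0 : 0 < phi b by apply: lt_le_trans hb1.
set u := dl^-1 *: (x - w).
set v := (phi b)^-1 *: b.
have hu : phi u = 1.
  by rewrite /u nZ hw ger0_norm ?invr_ge0 ?ltW // mulVf // gt_eqF.
have hv : phi v = 1.
  by rewrite /v nZ ger0_norm ?invr_ge0 ?ltW // mulVf // gt_eqF.
have ha : x - w = dl *: u by rewrite /u scalerA mulfV ?gt_eqF // scale1r.
have hbv : b = phi b *: v by rewrite /v scalerA mulfV ?gt_eqF // scale1r.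
have hab : mu * dl <= phi (((mu - 1) * dl) *: u + phi b *: v).
  apply: le_trans hmu _.
  rewrite -scalerA -ha -hbv /b.
  rewrite (_ : (mu - 1) *: (x - w) + (x - w') = w + mu *: (x - w) - w'); last first.
    by rewrite scalerBl scale1r opprB -addrA subrKA addrA (addrC _ w).
  by rewrite nB; apply: delta_lb.
have huv : phi (u - v) < e / (2 * t).
  rewrite ltNge; apply/negP => he.
  have pa0 : 0 < (mu - 1) * dl by rewrite mulr_gt0 // subr_gt0.
  have pab : (mu - 1) * dl <= phi b.
    apply: le_trans hb1.
    by rewrite -[X in _ <= X]mul1r ler_pM2r //; lra.
  have := @M2 k _ Hk _ _ _ _ hu hv pa0 pab he => h.
  have : k * ((mu - 1) * s) <= k * ((mu - 1) * dl).
    by rewrite ler_pM2l // ler_pM2l // subr_gt0.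
  lra.
have -> : w - w' = (phi b - dl) *: v + dl *: (v - u).
  rewrite scalerBl scalerBr -hbv -/u -ha /b.
  rewrite addrA subrK.
  by rewrite opprB addrC subrKA.
apply: le_lt_trans (nD ((phi b - dl) *: v) (dl *: (v - u))) _.
rewrite nZ [phi (dl *: _)]nZ hv mulr1 (ger0_norm (ltW dl0)) (nB v u).
have h1 : `|phi b - dl| <= 2 * eta by rewrite ger0_norm ?subr_ge0 //; lra.
have h2 : dl * phi (u - v) <= t * (e / (2 * t)).
  by apply: ler_pM => //; [apply: ltW | apply: nge0 | apply: ltW].
have h3 : t * (e / (2 * t)) = e / 2.
  by field; rewrite gt_eqF.
lra.
Qed.

End S.

Lemma key (R : realType) (n : nat) (phi : 'rV[R]_n -> R) (K : set 'rV[R]_n) (s t lam mu : R) x :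
  is_norm phi -> closed K -> 0 < s -> 1 < mu -> mu < lam ->
  Klst phi K lam s t x ->
  let w0 := xget 0 (xi phi K x) in
  [/\ K w0, phi (x - w0) = delta phi K x &
      mu * delta phi K x <= delta phi K (w0 + mu *: (x - w0))].
Proof.
move=> Hn cK s0 mu1 mulam [hrho /andP[hs ht]] w0.
have K0 : K !=set0.
  apply: contrapT => hK.
  have : delta phi K x = 0.
    rewrite /delta (_ : [set phi (y - x) | y in K] = set0) ?inf0 //.
    by apply/seteqP; split => r // [y Ky _]; apply: hK; exists y.
  by move=> h; move: hs; rewrite h; lra.
have [w [Kw hw]] := @delta_attain _ _ _ Hn K x cK K0.
have hxi : xi phi K x w0 by apply: xgetPex; exists w.
case: hxi => Kw0 hw0.
split => //.
move: hrho; rewrite /rho -/w0 /rho_at => hrho.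
have : (mu%:E < ereal_sup [set s'%:E | s' in
    [set s' : R | delta phi K (w0 + s' *: (x - w0)) = (s' * delta phi K x)%R]])%E.
  by apply: lt_le_trans hrho; rewrite lte_fin.
move=> /ereal_sup_gt [_ [s' hs' <-]]; rewrite lte_fin => mus'.
apply: (@rho_mu _ _ _ Hn K x w0 mu s' Kw0 hw0 _ hs').
by apply/andP; split; lra.
Qed.

Theorem corollary3p3 (R : realType) (n : nat) (phi : 'rV[R]_n -> R)
  (K : set 'rV[R]_n) (s t lam : R) :
  is_norm phi -> strictly_convex phi -> closed K ->
  0 < s -> s < t -> 1 < lam ->
  exists f : 'rV[R]_n -> 'rV[R]_n,
    (forall x, Klst phi K lam s t x -> xi phi K x = [set f x]) /\
    (forall e : R, 0 < e -> exists2 d : R, 0 < d &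
       forall x y, Klst phi K lam s t x -> Klst phi K lam s t y ->
         phi (x - y) < d -> phi (f x - f y) < e).
Proof.
move=> Hn Hsc cK s0 st lam1.
set mu := 1 + Num.min (lam - 1) 1 / 2.
have hm0 : 0 < Num.min (lam - 1) 1 by rewrite lt_min subr_gt0 lam1 ltr01.
have hm1 : Num.min (lam - 1) 1 <= lam - 1 by rewrite ge_min lexx.
have hm2 : Num.min (lam - 1) 1 <= 1 by rewrite ge_min lexx orbT.
have mu1 : 1 < mu by rewrite /mu; lra.
have mu2 : mu <= 2 by rewrite /mu; lra.
have mulam : mu < lam by rewrite /mu; lra.
have t0 : 0 < t by lra.
exists (fun x => xget 0 (xi phi K x)); split.
  move=> x hx.
  have [Kw0 hw0 hmu] := @key _ _ _ K s t lam mu x Hn cK s0 mu1 mulam hx.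
  have hx' := hx; case: hx' => _ /andP[hs ht].
  apply/seteqP; split => w; last by move=> ->; split.
  move=> [Kw hw]; apply/esym/eqP; rewrite -subr_eq0; apply/eqP/(@neq0 _ _ _ Hn).
  apply/eqP; rewrite eq_le (@nge0 _ _ _ Hn) andbT.
  rewrite leNgt; apply/negP => hpos.
  have [d d0 hd] := @main _ _ _ Hn Hsc K s t mu s0 t0 mu1 mu2 _ hpos.
  have := hd x x _ w Kw0 hw0 hs ht hmu Kw hw; rewrite subrr (@n0 _ _ _ Hn) => /(_ d0).
  by rewrite ltxx.
move=> e e0.
have [d d0 hd] := @main _ _ _ Hn Hsc K s t mu s0 t0 mu1 mu2 _ e0.
exists d => // x y hx hy hxy.
have [Kw0 hw0 hmu] := @key _ _ _ K s t lam mu x Hn cK s0 mu1 mulam hx.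
have [Kw1 hw1 _] := @key _ _ _ K s t lam mu y Hn cK s0 mu1 mulam hy.
case: hx => _ /andP[hs ht].
exact: hd x y _ _ Kw0 hw0 hs ht hmu Kw1 hw1 hxy.
Qed.
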